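(* Let $\kappa$ be a cumulant function with effective domain $\Theta$ satisfying Assumption (A1), let $v>0$, $\varphi>0$, $\theta\in\mathring\Theta$, $Y\sim\mathrm{EDF}(\theta,v,\varphi,\kappa)$ and $\delta\in(0,1)$. Define the random variables $$l^{\delta}(Y,v,\varphi,\kappa)=\inf\{\mu\in\kappa'(\mathring\Theta)\,:\,F^*(Y;h(\mu),v,\varphi,\kappa)\le 1-\delta\},$$ $$u^{\delta}(Y,v,\varphi,\kappa)=\sup\{\mu\in\kappa'(\mathring\Theta)\,:\,F(Y;h(\mu),v,\varphi,\kappa)\ge \delta\}.$$ Then $\mathbb P(\mathbb E[Y]\ge l^{\delta}(Y,v,\varphi,\kappa))\ge 1-\delta$ and $\mathbb P(\mathbb E[Y]\le u^{\delta}(Y,v,\varphi,\kappa))\ge 1-\delta$.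
   Context: A real random variable $Y$ follows $\mathrm{EDF}(\theta,v,\varphi,\kappa)$ if it has density $f(y)=\exp\{(y\theta-\kappa(\theta))/(\varphi/v)+a(y;v/\varphi)\}$ with respect to a $\sigma$-finite measure $\nu$ on $\mathbb R$ not depending on $\theta$; $\theta\in\Theta$ is the canonical parameter, $\Theta$ the effective domain, $\kappa$ the cumulant function, $v>0$ the volume, $\varphi>0$ the dispersion parameter, $a$ a normalizing function. Assumption (A1): $\Theta$ has non-empty interior $\mathring{\Theta}$ and $\nu$ is not a single point mass. Then $\kappa$ is strictly convex and smooth on $\mathring\Theta$, $\mathbb E[Y]=\kappa'(\theta)$, $\kappa'(\mathring\Theta)$ is the mean parameter space and $h=(\kappa')^{-1}$ the canonical link. For $\mu\in\kappa'(\mathring\Theta)$ and $y\in\mathbb R$, $F(y;h(\mu),v,\varphi,\kappa)=\mathbb P(W\le y)$ and $F^*(y;h(\mu),v,\varphi,\kappa)=\mathbb P(W<y)$ where $W\sim\mathrm{EDF}(h(\mu),v,\varphi,\kappa)$. *)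

(* Defs.v *)
From HB Require Import structures.
From mathcomp Require Import all_boot all_order all_algebra.
From mathcomp Require Import all_classical all_reals all_analysis.
Set Implicit Arguments. Unset Strict Implicit. Unset Printing Implicit Defensive.
Import Order.TTheory GRing.Theory Num.Theory.
Import numFieldNormedType.Exports.
Local Open Scope classical_set_scope.
Local Open Scope ring_scope.

(* Exponential dispersion family EDF(theta, v, phi, kappa) on the real line,
   with respect to a fixed sigma-finite (Borel) measure nu on R and a
   normalizing function a(. ; v/phi), here written a : R -> R for the fixed
   weight v/phi. *)

Section EDF.
Variable R : realType.

Definition edf_density (kappa : R -> R) (v phi : R) (a : R -> R)
  (theta : R) (y : R) : R :=
  expR ((y * theta - kappa theta) / (phi / v) + a y).

Definition edf_cdf (nu : {measure set R -> \bar R}) (kappa : R -> R)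
  (v phi : R) (a : R -> R) (theta y : R) : \bar R :=
  (\int[nu]_(x in `]-oo, y]) (edf_density kappa v phi a theta x)%:E)%E.

Definition edf_cdf_strict (nu : {measure set R -> \bar R}) (kappa : R -> R)
  (v phi : R) (a : R -> R) (theta y : R) : \bar R :=
  (\int[nu]_(x in `]-oo, y[) (edf_density kappa v phi a theta x)%:E)%E.

Definition mean_space (kappa : R -> R) (Theta : set R) : set R :=
  (derive1 kappa) @` (interior Theta).

Definition canon_link (kappa : R -> R) (Theta : set R) (mu : R) : R :=
  xget 0 [set t | interior Theta t /\ derive1 kappa t = mu].

(* l^delta(y, v, phi, kappa) = inf{mu in kappa'(Theta°) : F^*(y; h(mu)) <= 1 - delta},
   as an extended real (inf of the empty set is +oo). *)
Definition edf_lower (nu : {measure set R -> \bar R}) (kappa : R -> R)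
  (Theta : set R) (v phi : R) (a : R -> R) (delta y : R) : \bar R :=
  ereal_inf [set mu%:E | mu in [set mu | mean_space kappa Theta mu /\
     (edf_cdf_strict nu kappa v phi a (canon_link kappa Theta mu) y
        <= (1 - delta)%:E)%E]].

(* u^delta(y, v, phi, kappa) = sup{mu in kappa'(Theta°) : F(y; h(mu)) >= delta},
   as an extended real (sup of the empty set is -oo). *)
Definition edf_upper (nu : {measure set R -> \bar R}) (kappa : R -> R)
  (Theta : set R) (v phi : R) (a : R -> R) (delta y : R) : \bar R :=
  ereal_sup [set mu%:E | mu in [set mu | mean_space kappa Theta mu /\
     (delta%:E <= edf_cdf nu kappa v phi a (canon_link kappa Theta mu) y)%E]].

End EDF.

(* Main.v *)
Require Import Defs.
From HB Require Import structures.
From mathcomp Require Import all_boot all_order all_algebra.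
From mathcomp Require Import all_classical all_reals all_analysis.
From mathcomp Require Import measurable_realfun.
From mathcomp Require Import ring lra.
Import Order.TTheory GRing.Theory Num.Theory.
Import numFieldNormedType.Exports.
Local Open Scope classical_set_scope.
Local Open Scope ring_scope.
Section cdf.
Context {R : realType} (P : {measure set R -> \bar R}).
Hypothesis P1 : P setT = 1%E.

Lemma P_le1 A : measurable A -> (P A <= 1)%E.
Proof. by move=> mA; rewrite -P1 le_measure ?inE. Qed.

Lemma Ploo_mono (x y : R) : x <= y -> (P (`]-oo, x[)%classic <= P (`]-oo, y[)%classic)%E.
Proof.
move=> xy; rewrite le_measure ?inE//; move=> z /=; rewrite !in_itv /= => zx.
exact: lt_le_trans zx xy.
Qed.

Lemma Ploc_mono (x y : R) : x <= y -> (P (`]-oo, x])%classic <= P (`]-oo, y])%classic)%E.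
Proof.
move=> xy; rewrite le_measure ?inE//; move=> z /=; rewrite !in_itv /= => zx.
exact: le_trans zx xy.
Qed.

Lemma cdf_lower (d : R) : 0 < d < 1 ->
  exists S, [/\ measurable S, S `<=` [set y | (P (`]-oo, y[)%classic <= (1 - d)%:E)%E]
     & ((1 - d)%:E <= P S)%E].
Proof.
move=> /andP[d0 d1].
have hd : (0 < 1 - d) by rewrite subr_gt0.
set C := [set y | ((1 - d)%:E < P (`]-oo, y[)%classic)%E].
have [[y0 Cy0]|C0] := pselect (C !=set0); last first.
  exists setT; split => //.
    move=> y _ /=; rewrite leNgt; apply/negP => Cy; apply: C0; by exists y.
  by rewrite P1 lee_fin gerBl ltW.
have hinf : has_inf C.
  apply: contrapT => hn.
  have hall := (has_infPn (ex_intro _ y0 Cy0)).1 hn.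
  pose F n : set R := (`]-oo, - n%:R[)%classic.
  have mF n : measurable (F n) by exact: measurable_itv.
  have capF : \bigcap_n F n = set0.
    apply/seteqP; split => // x Fx.
    have [n xn] : exists n : nat, - n%:R <= x.
      by exists (Num.truncn (- x)).+1; rewrite lerNl; exact/ltW/truncnS_gt.
    have := Fx n I; rewrite /F /= in_itv /= => h.
    by have := lt_le_trans h xn; rewrite ltxx.
  have Fni : nonincreasing_seq F.
    move=> n m nm; apply/subsetPset => x; rewrite /F /= !in_itv /= => h; apply: lt_le_trans h _.
    by rewrite lerN2 ler_nat.
  have := @nonincreasing_cvg_mu _ _ _ P F _ mF _ Fni.
  rewrite capF measure0 => /(_ _ _) hc.
  have hc' := hc (le_lt_trans (P_le1 _ (mF 0%N)) (ltry _)) measurable0.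
  have : ((1 - d)%:E <= limn (P \o F))%E.
    apply: lime_ge; first by apply/cvg_ex; eexists; exact: hc'.
    apply: nearW => n /=; have [y Cy yn] := hall (- n%:R).
    by apply/ltW/(lt_le_trans Cy)/Ploo_mono/ltW.
  by rewrite (cvg_lim _ hc') // lee_fin leNgt hd.
set b := inf C.
have lbC : lbound C b := ge_inf (proj2 hinf).
have notC y : y < b -> ~ C y.
  by move=> yb Cy; have := lbC _ Cy; rewrite leNgt yb.
have [Cb|nCb] := pselect (C b).
  exists (`]-oo, b[)%classic; split; first exact: measurable_itv.
    move=> y /=; rewrite in_itv /= => yb; rewrite leNgt; apply/negP => Cy.
    exact: notC yb Cy.
  exact/ltW.
exists (`]-oo, b])%classic; split; first exact: measurable_itv.
  move=> y /=; rewrite in_itv /= => yb; rewrite leNgt; apply/negP => Cy.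
  move: yb; rewrite le_eqVlt => /orP[/eqP yb|yb]; first by rewrite yb in Cy.
  exact: notC yb Cy.
pose G n : set R := (`]-oo, b + n.+1%:R^-1[)%classic.
have mG n : measurable (G n) by exact: measurable_itv.
have capG : \bigcap_n G n = (`]-oo, b])%classic.
  apply/seteqP; split => x /=.
    move=> Gx; rewrite in_itv /= leNgt; apply/negP => bx.
    have [k hk] := ltr_add_invr bx.
    by have := Gx k I; rewrite /G /= in_itv /= => h; have := lt_trans h hk; rewrite ltxx.
  rewrite in_itv /= => xb n _; rewrite /G /= in_itv /=.
  by apply: le_lt_trans xb _; rewrite ltrDl invr_gt0 ltr0n.
have Gni : nonincreasing_seq G.
  move=> n m nm; apply/subsetPset => x; rewrite /G /= !in_itv /= => h.
  apply: lt_le_trans h _; rewrite lerD2l lef_pV2 ?posrE ?ltr0n// ler_nat.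
  by rewrite ltnS.
have mcapG : measurable (\bigcap_n G n) by rewrite capG; exact: measurable_itv.
have hc := @nonincreasing_cvg_mu _ _ _ P G
  (le_lt_trans (P_le1 _ (mG 0%N)) (ltry _)) mG mcapG Gni.
rewrite capG in hc.
rewrite -(cvg_lim _ hc) //.
apply: lime_ge; first by apply/cvg_ex; eexists; exact: hc.
apply: nearW => n /=.
have e0 : 0 < n.+1%:R^-1 :> R by rewrite invr_gt0 ltr0n.
have [y Cy yb] := inf_adherent e0 hinf.
by apply/ltW/(lt_le_trans Cy)/Ploo_mono/ltW.
Qed.

Lemma P_fin A : measurable A -> exists r : R, P A = r%:E /\ 0 <= r <= 1.
Proof.
move=> mA; have h1 := P_le1 _ mA; have h0 := measure_ge0 P A.
have hf : P A \is a fin_num by rewrite ge0_fin_numE// (le_lt_trans h1 (ltry _)).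
exists (fine (P A)); split; first by rewrite fineK.
by rewrite fine_ge0//= -lee_fin fineK.
Qed.

Lemma PC A : measurable A -> P (~` A) = (1 - P A)%E.
Proof.
move=> mA; rewrite -setTD measureD//.
  by rewrite setTI; change (P setT - P A = 1 - P A)%E; rewrite P1.
by change (P setT < +oo)%E; rewrite P1 ltry.
Qed.

Lemma cdf_upper (d : R) : 0 < d < 1 ->
  exists S, [/\ measurable S, S `<=` [set y | (d%:E <= P (`]-oo, y])%classic)%E]
     & ((1 - d)%:E <= P S)%E].
Proof.
move=> /andP[d0 d1].
set D := [set y | (P (`]-oo, y])%classic < d%:E)%E].
have [[y0 Dy0]|D0] := pselect (D !=set0); last first.
  exists setT; split => //.
    move=> y _ /=; rewrite leNgt; apply/negP => Dy; apply: D0; by exists y.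
  by rewrite P1 lee_fin gerBl ltW.
have hsup : has_sup D.
  apply: contrapT => hn.
  have hall := (has_supPn (ex_intro _ y0 Dy0)).1 hn.
  pose F n : set R := (`]-oo, n%:R])%classic.
  have mF n : measurable (F n) by exact: measurable_itv.
  have cupF : \bigcup_n F n = setT.
    apply/seteqP; split => // x _.
    exists (Num.truncn x).+1 => //; rewrite /F /= in_itv /=.
    exact/ltW/truncnS_gt.
  have Fnd : nondecreasing_seq F.
    move=> n m nm; apply/subsetPset => x; rewrite /F /= !in_itv /= => h.
    by apply: le_trans h _; rewrite ler_nat.
  have mcup : measurable (\bigcup_n F n) by rewrite cupF.
  have hc := @nondecreasing_cvg_mu _ _ _ P F mF mcup Fnd.
  rewrite cupF P1 in hc.
  have : (limn (P \o F) <= d%:E)%E.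
    apply: lime_le; first by apply/cvg_ex; eexists; exact: hc.
    apply: nearW => n /=; have [y Dy ny] := hall n%:R.
    by apply/ltW/(le_lt_trans _ Dy)/Ploc_mono/ltW.
  by rewrite (cvg_lim _ hc) // lee_fin leNgt d1.
set b := sup D.
have ubD : ubound D b := sup_upper_bound hsup.
have notD y : b < y -> ~ D y.
  by move=> yb Dy; have := ubD _ Dy; rewrite leNgt yb.
have [Db|nDb] := pselect (D b).
  exists (`]b, +oo[)%classic; split; first exact: measurable_itv.
    move=> y /=; rewrite in_itv /= andbT => yb; rewrite leNgt; apply/negP => Dy.
    exact: notD yb Dy.
  rewrite -setCitvl PC; last exact: measurable_itv.
  move: Db; rewrite /D /=.
  have [r [-> /andP[r0 r1]]] := P_fin _ (measurable_itv `]-oo, b]).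
  by rewrite -EFinB !lte_fin lee_fin => rd; rewrite lerB// ltW.
exists (`[b, +oo[)%classic; split; first exact: measurable_itv.
  move=> y /=; rewrite in_itv /= andbT => yb; rewrite leNgt; apply/negP => Dy.
  move: yb; rewrite le_eqVlt => /orP[/eqP yb|yb]; first by rewrite -yb in Dy.
  exact: notD yb Dy.
rewrite -setCitvl PC; last exact: measurable_itv.
pose G n : set R := (`]-oo, b - n.+1%:R^-1])%classic.
have mG n : measurable (G n) by exact: measurable_itv.
have cupG : \bigcup_n G n = (`]-oo, b[)%classic.
  apply/seteqP; split => x /=.
    move=> [n _]; rewrite /G /= !in_itv /= => h.
    by apply: le_lt_trans h _; rewrite gtrBl invr_gt0 ltr0n.
  rewrite in_itv /= => xb.
  have [k hk] := ltr_add_invr xb.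
  by exists k => //; rewrite /G /= in_itv /= lerBrDr ltW.
have Gnd : nondecreasing_seq G.
  move=> n m nm; apply/subsetPset => x; rewrite /G /= !in_itv /= => h.
  apply: le_trans h _; rewrite lerD2l lerN2 lef_pV2 ?posrE ?ltr0n// ler_nat.
  by rewrite ltnS.
have mcupG : measurable (\bigcup_n G n) by rewrite cupG; exact: measurable_itv.
have hc := @nondecreasing_cvg_mu _ _ _ P G mG mcupG Gnd.
rewrite cupG in hc.
have : (P (`]-oo, b[)%classic <= d%:E)%E.
  rewrite -(cvg_lim _ hc) //.
  apply: lime_le; first by apply/cvg_ex; eexists; exact: hc.
  apply: nearW => n /=.
  have e0 : 0 < n.+1%:R^-1 :> R by rewrite invr_gt0 ltr0n.
  have [y Dy yb] := sup_adherent e0 hsup.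
  by apply/ltW/(le_lt_trans _ Dy)/Ploc_mono/ltW.
have [r [-> /andP[r0 r1]]] := P_fin _ (measurable_itv `]-oo, b[).
by rewrite -EFinB !lee_fin => rd; rewrite lerB.
Qed.
End cdf.
Lemma integral_subset_any d (T : measurableType d) (R : realType)
  (mu : {measure set T -> \bar R}) (f : T -> \bar R) (A B : set T) :
  (forall x, B x -> (0 <= f x)%E) -> A `<=` B ->
  (\int[mu]_(x in A) f x <= \int[mu]_(x in B) f x)%E.
Proof.
move=> f0 AB; rewrite !ge0_integralE//; last by move=> x /AB; exact: f0.
apply: le_ereal_sup => _ [h /= hf <-]; exists h => //= x.
apply: (le_trans (hf x)); rewrite /patch.
case: ifPn => [/set_mem/AB/mem_set -> //|_].
by case: ifPn => [/set_mem/f0 //|].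
Qed.

Definition dmeas (R : realType) (nu : {measure set R -> \bar R}) (p : R -> R)
  (mp : measurable_fun setT p) (p0 : forall x, 0 <= p x) : set R -> \bar R :=
  fun A => (\int[nu]_(x in A) (p x)%:E)%E.

Section dmeas.
Context (R : realType) (nu : {measure set R -> \bar R}) (p : R -> R)
  (mp : measurable_fun setT p) (p0 : forall x, 0 <= p x).
Local Notation P := (@dmeas R nu p mp p0).

Let P0 : P set0 = 0%E. Proof. by rewrite /P /dmeas integral_set0. Qed.
Let Pge0 A : (0 <= P A)%E.
Proof. by apply: integral_ge0 => x _; rewrite lee_fin. Qed.
Let Psig : semi_sigma_additive P.
Proof.
apply: (@semi_sigma_additive_nng_induced _ _ R nu (fun x => (p x)%:E)).
  exact/measurable_EFinP.
by move=> x; rewrite lee_fin.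
Qed.
HB.instance Definition _ := isMeasure.Build _ _ _ P P0 Pge0 Psig.
End dmeas.
Lemma x_le_expR (R : realType) (x : R) : x <= expR x.
Proof. by apply: le_trans (expR_ge1Dx x); rewrite lerDr. Qed.

Lemma key_ineq (R : realType) (s t th e : R) : 0 < e -> th - e < t -> t < th + e ->
  `|s| * expR (s * t) <= e^-1 * (expR (s * (th - 2 * e)) + expR (s * (th + 2 * e))).
Proof.
move=> e0 h1 h2.
have ie0 : 0 < e^-1 by rewrite invr_gt0.
have [s0|s0] := leP 0 s.
  rewrite ger0_norm//.
  have hA : s * expR (s * t) <= s * expR (s * (th + e)).
    by rewrite ler_wpM2l// ler_expR ler_wpM2l// ltW.
  have hB : s <= e^-1 * expR (s * e).
    rewrite -(ler_pM2l e0) mulrA mulfV ?gt_eqF// mul1r mulrC; exact: x_le_expR.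
  apply: (le_trans hA); apply: (le_trans (ler_wpM2r (expR_ge0 _) hB)).
  rewrite -mulrA -expRD; apply: ler_wpM2l; first exact: ltW.
  have -> : s * e + s * (th + e) = s * (th + 2 * e) by ring.
  by rewrite lerDr expR_ge0.
rewrite ltr0_norm//.
have hA : - s * expR (s * t) <= - s * expR (s * (th - e)).
  apply: ler_wpM2l; first by rewrite oppr_ge0 ltW.
  rewrite ler_expR; apply: ler_wnM2l; first exact: ltW.
  exact: ltW.
have hB : - s <= e^-1 * expR (- s * e).
  rewrite -(ler_pM2l e0) mulrA mulfV ?gt_eqF// mul1r mulrC; exact: x_le_expR.
apply: (le_trans hA); apply: (le_trans (ler_wpM2r (expR_ge0 _) hB)).
rewrite -mulrA -expRD; apply: ler_wpM2l; first exact: ltW.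
have -> : - s * e + s * (th - e) = s * (th - 2 * e) by ring.
by rewrite lerDl expR_ge0.
Qed.
Section analysis.
Context (R : realType) (nu : {measure set R -> \bar R}) (a : R -> R)
  (kappa : R -> R) (Theta : set R) (v phi : R).
Hypothesis ma : measurable_fun setT a.
Hypothesis v0 : 0 < v.
Hypothesis phi0 : 0 < phi.
Hypothesis hTheta :
  Theta = [set t | (\int[nu]_x (expR (x * t / (phi / v) + a x))%:E < +oo)%E].
Hypothesis hnorm : forall t, Theta t ->
     (\int[nu]_x (edf_density kappa v phi a t x)%:E)%E = 1%E.

Let c := phi / v.
Let c0 : 0 < c. Proof. by rewrite divr_gt0. Qed.

Definition gg t y := expR (y * t / c + a y).

Lemma mgg t : measurable_fun setT (gg t).
Proof.
exact: (measurableT_comp (@measurable_expR R) (measurable_funD (measurable_funM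
  (measurable_funM (@measurable_id _ _ _) (measurable_cst t)) (measurable_cst c^-1)) ma)).
Qed.

Lemma gg_ge0 t y : 0 <= gg t y. Proof. exact: expR_ge0. Qed.

Lemma int_gg t : Theta t -> nu.-integrable setT (EFin \o gg t).
Proof.
rewrite hTheta /= => ht; apply/integrableP; split.
  by apply/measurable_EFinP; exact: mgg.
under eq_integral do rewrite /= ger0_norm ?gg_ge0//.
exact: ht.
Qed.

Definition Zr t := (\int[nu]_y gg t y)%R.

Lemma densE t y : edf_density kappa v phi a t y = expR (- kappa t / c) * gg t y.
Proof.
rewrite /edf_density /gg -expRD; congr expR.
rewrite /c; ring.
Qed.

Lemma ZrE t : Theta t -> Zr t = expR (kappa t / c).
Proof.
move=> ht; have := hnorm _ ht.
under eq_integral do rewrite densE EFinM.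
have h1 : forall x, setT x -> (0 <= (gg t x)%:E)%E by move=> x _; rewrite lee_fin gg_ge0.
have h2 : measurable_fun setT (fun x => (gg t x)%:E) by apply/measurable_EFinP; exact: mgg.
have h3 := expR_ge0 (- kappa t / c).
rewrite ge0_integralZl_EFin//.
rewrite -(fineK (integrable_fin_num _ (int_gg _ ht))) //= -EFinM => /eqP.
rewrite eqe => /eqP h.
rewrite /Zr /Rintegral.
apply: (@mulfI _ (expR (- kappa t / c))); first by rewrite gt_eqF ?expR_gt0.
by rewrite h mulNr expRN mulVf// gt_eqF// expR_gt0.
Qed.

Lemma Zr_gt0 t : Theta t -> 0 < Zr t.
Proof. by move=> /ZrE ->; exact: expR_gt0. Qed.

Lemma kappaE t : Theta t -> kappa t = c * ln (Zr t).
Proof. by move=> /ZrE ->; rewrite expRK mulrC divfK ?gt_eqF. Qed.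


Lemma is_derive_gg (y t : R) : is_derive t 1 (fun s => gg s y) (gg t y * (y / c)).
Proof.
have hl : is_derive t 1 (fun s : R => y / c * s + a y) (y / c).
  have h := is_deriveD (is_deriveZ (y / c) (is_derive_id t (1:R)))
     (is_derive_cst (a y) t (1:R)).
  move: h; rewrite addr0 => -[hd hv]; split; first exact: hd.
  rewrite -[RHS]mulr1; exact: hv.
have := @is_derive1_comp R expR (fun s : R => y / c * s + a y) t _ _ (is_derive_expR _) hl.
have -> : (expR \o (fun s : R => y / c * s + a y)) = (fun s => gg s y).
  by apply/funext => s; rewrite /gg /= mulrAC mulrC.
by rewrite /gg /= (mulrAC y c^-1 t).
Qed.


Lemma iZ (f : R -> R) k : nu.-integrable setT (EFin \o f) ->
  nu.-integrable setT (EFin \o (fun x => k * f x)).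
Proof.
move=> h; apply: (eq_integrable measurableT _ _ _ (integrableZl measurableT k h)) => x _ /=.
by rewrite EFinM.
Qed.

Lemma iD (f g : R -> R) : nu.-integrable setT (EFin \o f) ->
  nu.-integrable setT (EFin \o g) ->
  nu.-integrable setT (EFin \o (fun x => f x + g x)).
Proof.
move=> hf hg; apply: (eq_integrable measurableT _ _ _ (integrableD measurableT hf hg)) => // x _ /=.
Qed.

Lemma iB (f g : R -> R) : nu.-integrable setT (EFin \o f) ->
  nu.-integrable setT (EFin \o g) ->
  nu.-integrable setT (EFin \o (fun x => f x - g x)).
Proof.
move=> hf hg; apply: (eq_integrable measurableT _ _ _ (integrableB measurableT hf hg)) => // x _ /=.
Qed.

Definition Nr t := (\int[nu]_y (y * gg t y))%R.

Lemma d1gg x y : partial1of2 gg x y = gg x y * (y / c).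
Proof. by rewrite partial1of2E; case: (is_derive_gg y x). Qed.

Lemma gg_split t y : gg t y = expR (y / c * t) * expR (a y).
Proof. by rewrite /gg -expRD mulrAC. Qed.

Lemma deriv_kappa th : interior Theta th ->
  nu.-integrable setT (EFin \o (fun y => y * gg th y)) /\
  derive1 kappa th = Nr th / Zr th.
Proof.
move=> hth; have /nbhs_ballP[r r0 hb] := hth.
pose e := r / 4.
have e0 : 0 < e by rewrite divr_gt0.
have re : r = 4 * e by rewrite /e mulrC divfK.
have inT t : th - 2 * e <= t -> t <= th + 2 * e -> Theta t.
  move=> h1 h2; apply: hb; rewrite /ball /= ltr_norml re; apply/andP; split.
    lra.
  lra.
have Ith : `]th - e, th + e[%classic th.
  by rewrite /= in_itv /=; apply/andP; split; lra.
have intf x : `]th - e, th + e[%classic x -> nu.-integrable setT (EFin \o gg x).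
  rewrite /= in_itv /= => /andP[h1 h2]; apply: int_gg; apply: inT; lra.
have derf1 x y : `]th - e, th + e[%classic x -> setT y -> derivable (gg^~ y) x 1.
  by move=> _ _; case: (is_derive_gg y x).
pose G y := e^-1 * (gg (th - 2 * e) y + gg (th + 2 * e) y).
have G_ge0 y : 0 <= G y.
  by rewrite /G; apply: mulr_ge0; [rewrite invr_ge0 ltW | apply: addr_ge0; apply: gg_ge0].
have intG : nu.-integrable setT (EFin \o G).
  apply: iZ; apply: iD; apply: int_gg; apply: inT; lra.
have G_ub x y : `]th - e, th + e[%classic x -> setT y ->
    `|partial1of2 gg x y| <= G y.
  rewrite /= in_itv /= => /andP[h1 h2] _.
  rewrite d1gg /G !gg_split normrM ger0_norm ?expR_ge0// mulrC mulrA.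
  rewrite -!mulrDl mulrA ler_wpM2r ?expR_ge0//.
  exact: key_ineq.
have dZ := differentiation_under_integral measurableT Ith intf derf1 G_ge0 intG G_ub.
have derZ := derivable_under_integral measurableT Ith intf derf1 G_ge0 intG G_ub.
have intN : nu.-integrable setT (EFin \o (fun y => y * gg th y)).
  apply: (le_integrable measurableT _ _ (iZ G c intG)).
    apply/measurable_EFinP; apply: measurable_funM; first exact: measurable_id.
    exact: mgg.
  move=> y _ /=.
  have := G_ub th y Ith I; rewrite d1gg => h.
  rewrite lee_fin (ger0_norm (mulr_ge0 (ltW c0) (G_ge0 y))).
  have -> : y * gg th y = c * (gg th y * (y / c)) by field; rewrite gt_eqF.
  rewrite normrM (ger0_norm (ltW c0)); apply: ler_wpM2l => //; exact: ltW.
split => //.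
have thT : Theta th by exact: nbhs_singleton hth.
have hnear : \forall t \near th, kappa t = c * ln (Zr t).
  by near=> t; apply: kappaE; near: t; exact: hth.
rewrite derive1E (near_eq_derive _ hnear).
have hZ := derivableP derZ.
have hL := is_derive1_comp (is_derive1_ln (Zr_gt0 _ thT)) hZ.
have hK := is_deriveZ c hL.
have -> : (fun t => c * ln (Zr t)) = c \*: (@ln R \o Zr) by [].
case: hK => _ ->.
rewrite -derive1E dZ.
have -> : (\int[nu]_y partial1of2 gg th y)%R = c^-1 * Nr th.
  rewrite /Nr -RintegralZl//; apply: eq_Rintegral => y _.
  by rewrite d1gg /=; field; rewrite gt_eqF.
change (c * ((Zr th)^-1 * (c^-1 * Nr th)) = Nr th / Zr th).
by field; rewrite ?gt_eqF ?(Zr_gt0 _ thT).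
Unshelve. all: by end_near.
Qed.


Hypothesis hA1 : forall z : R, nu (~` [set z]) != 0%E.

Lemma mean_lt t1 t2 : interior Theta t1 -> interior Theta t2 -> t1 < t2 ->
  Nr t1 / Zr t1 < Nr t2 / Zr t2.
Proof.
move=> h1 h2 t12.
have [iN1 _] := deriv_kappa _ h1.
have [iN2 _] := deriv_kappa _ h2.
have T1 : Theta t1 by exact: nbhs_singleton h1.
have T2 : Theta t2 by exact: nbhs_singleton h2.
have iZ1 := int_gg _ T1; have iZ2 := int_gg _ T2.
have Z1 := Zr_gt0 _ T1; have Z2 := Zr_gt0 _ T2.
set m := Nr t1 / Zr t1.
set dd := (t2 - t1) / c.
have dd0 : 0 < dd by rewrite divr_gt0 // subr_gt0.
set q := expR (m * dd).
have gsh y : gg t2 y = gg t1 y * expR (y * dd).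
  by rewrite /gg -expRD /dd; congr expR; field; rewrite gt_eqF.
pose k y := (y - m) * (expR (y * dd) - q) * gg t1 y.
have k_ge0 y : 0 <= k y.
  rewrite /k; apply: mulr_ge0; last exact: gg_ge0.
  have [ym|ym] := leP y m.
    rewrite -mulrNN; apply: mulr_ge0; first by rewrite oppr_ge0 subr_le0.
    by rewrite oppr_ge0 subr_le0 /q ler_expR ler_wpM2r // ltW.
  apply: mulr_ge0; first by rewrite subr_ge0 ltW.
  by rewrite subr_ge0 /q ler_expR ler_wpM2r // ltW.
have k_gt0 y : y != m -> 0 < k y.
  move=> ym; rewrite /k; apply: mulr_gt0; last exact: expR_gt0.
  have [ym'|ym'|ym'] := ltgtP y m.
  - rewrite -mulrNN; apply: mulr_gt0; first by rewrite oppr_gt0 subr_lt0.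
    by rewrite oppr_gt0 subr_lt0 /q ltr_expR ltr_pM2r.
  - apply: mulr_gt0; first by rewrite subr_gt0.
    by rewrite subr_gt0 /q ltr_expR ltr_pM2r.
  - by rewrite ym' eqxx in ym.
have k_eq y : k y = (y * gg t2 y - m * gg t2 y) - q * (y * gg t1 y) + (q * m) * gg t1 y.
  by rewrite /k gsh; ring.
have i2a : nu.-integrable setT (EFin \o (fun y => y * gg t2 y - m * gg t2 y)).
  by apply: iB => //; apply: iZ.
have i2b : nu.-integrable setT (EFin \o (fun y => (y * gg t2 y - m * gg t2 y) - q * (y * gg t1 y))).
  by apply: iB => //; apply: iZ.
have i2c : nu.-integrable setT (EFin \o (fun y => (q * m) * gg t1 y)) by apply: iZ.
have ik : nu.-integrable setT (EFin \o k).
  apply: (eq_integrable measurableT _ _ _ (iD _ _ i2b i2c)) => y _ /=.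
  by rewrite k_eq.
have Ik : (\int[nu]_y k y)%R = Nr t2 - m * Zr t2.
  rewrite (eq_Rintegral _ (fun y _ => k_eq y)).
  rewrite (RintegralD (f1 := fun y : R => y * gg t2 y - m * gg t2 y - q * (y * gg t1 y))
    (f2 := fun y : R => q * m * gg t1 y))//.
  rewrite (RintegralB (f1 := fun y : R => y * gg t2 y - m * gg t2 y)
    (f2 := fun y : R => q * (y * gg t1 y)))//; last by apply: iZ.
  rewrite (RintegralB (f1 := fun y : R => y * gg t2 y)
    (f2 := fun y : R => m * gg t2 y))//; last by apply: iZ.
  rewrite !RintegralZl// -/(Nr t2) -/(Zr t2) -/(Zr t1) -/(Nr t1).
  have -> : Nr t1 = m * Zr t1 by rewrite /m divfK ?gt_eqF.
  ring.
have mk : measurable_fun setT k.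
  exact: (measurable_funM (measurable_funM (measurable_funB (@measurable_id _ _ _) (measurable_cst m))
    (measurable_funB (measurableT_comp (@measurable_expR R) (measurable_funM (@measurable_id _ _ _) (measurable_cst dd)))
      (measurable_cst q))) (mgg t1)).
have Ik0 : 0 < (\int[nu]_y k y)%R.
  rewrite lt_neqAle Rintegral_ge0 ?andbT; last by move=> y _; exact: k_ge0.
  apply/negP => /eqP hk.
  have hk' : (\int[nu]_(y in setT) `|(EFin \o k) y|)%E = 0%E.
    rewrite (eq_integral (fun y => (k y)%:E)); last by move=> y _; rewrite /= ger0_norm// k_ge0.
    move: hk; rewrite /Rintegral => hk.
    rewrite -[LHS]fineK; first by move: hk; rewrite /= => <-.
    exact: (integrable_fin_num measurableT ik).
  have [N [mN N0 hN]] := (ae_eq_integral_abs _ measurableT ((measurable_EFinP _ _).2 mk)).1 hk'.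
  have sub : ~` [set m] `<=` N.
    move=> y /= ym; apply: hN => /= /(_ I) /eqP; rewrite eqe gt_eqF //.
    by apply: k_gt0; apply/eqP.
  have : (nu (~` [set m]) <= nu N)%E.
    by apply: le_measure; rewrite ?inE//; apply: measurableC; exact: measurable_set1.
  by rewrite N0 measure_le0 (negbTE (hA1 m)).
by rewrite ltr_pdivlMr // -subr_gt0 -Ik.
Qed.


Lemma canon_theta th : interior Theta th ->
  canon_link kappa Theta (derive1 kappa th) = th.
Proof.
move=> hth; rewrite /canon_link.
have : [set t | interior Theta t /\ derive1 kappa t = derive1 kappa th]
  (xget 0 [set t | interior Theta t /\ derive1 kappa t = derive1 kappa th]).
  by apply: xgetPex; exists th.
set t := xget _ _ => -[ht hd].
have [_ e1] := deriv_kappa _ ht.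
have [_ e2] := deriv_kappa _ hth.
have [tth|tth|//] := ltgtP t th.
  by have := mean_lt _ _ ht hth tth; rewrite -e1 -e2 hd ltxx.
by have := mean_lt _ _ hth ht tth; rewrite -e1 -e2 hd ltxx.
Qed.

Lemma main_sec th delta : interior Theta th -> 0 < delta < 1 ->
  ((1 - delta)%:E <=
     \int[nu]_(y in [set y | edf_lower nu kappa Theta v phi a delta y
                              <= (derive1 kappa th)%:E])
        (edf_density kappa v phi a th y)%:E)%E
  /\
  ((1 - delta)%:E <=
     \int[nu]_(y in [set y | (derive1 kappa th)%:E
                              <= edf_upper nu kappa Theta v phi a delta y])
        (edf_density kappa v phi a th y)%:E)%E.
Proof.
move=> hth hd.
have thT : Theta th by exact: nbhs_singleton hth.
pose p := edf_density kappa v phi a th.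
have mp : measurable_fun setT p.
  have -> : p = (fun y => expR (- kappa th / c) * gg th y).
    by apply/funext => y; rewrite /p densE.
  exact: (measurable_funM (measurable_cst _) (mgg th)).
have p0 : forall x, 0 <= p x by move=> x; exact: expR_ge0.
pose P := @dmeas R nu p mp p0.
have P1 : P setT = 1%E by exact: hnorm.
have hc := canon_theta _ hth.
have inm : mean_space kappa Theta (derive1 kappa th) by exists th.
split.
  have [S [mS SA PS]] := cdf_lower _ P1 _ hd.
  apply: (le_trans PS); apply: integral_subset_any.
    by move=> x _; rewrite lee_fin.
  move=> y Sy; have := SA y Sy => /= hy.
  apply: ereal_inf_lbound; exists (derive1 kappa th) => //; split => //.
  by rewrite hc.
have [S [mS SA PS]] := cdf_upper _ P1 _ hd.
apply: (le_trans PS); apply: integral_subset_any.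
  by move=> x _; rewrite lee_fin.
move=> y Sy; have := SA y Sy => /= hy.
apply: ereal_sup_ubound; exists (derive1 kappa th) => //; split => //.
by rewrite hc.
Qed.

End analysis.



Theorem proposition3p5 (R : realType) (nu : {measure set R -> \bar R})
  (a : R -> R) (kappa : R -> R) (Theta : set R) (v phi theta delta : R) :
  sigma_finite setT nu ->
  measurable_fun setT a ->
  0 < v -> 0 < phi ->
  (* Theta is the effective domain *)
  Theta = [set t | (\int[nu]_x (expR (x * t / (phi / v) + a x))%:E < +oo)%E] ->
  (* kappa is the cumulant function: the densities integrate to one on Theta *)
  (forall t, Theta t ->
     (\int[nu]_x (edf_density kappa v phi a t x)%:E)%E = 1%E) ->
  (* Assumption (A1) *)
  (interior Theta !=set0) ->
  (forall c : R, nu (~` [set c]) != 0%E) ->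
  interior Theta theta ->
  0 < delta < 1 ->
  (* P(E[Y] >= l^delta(Y)) >= 1 - delta, with E[Y] = kappa'(theta) *)
  ((1 - delta)%:E <=
     \int[nu]_(y in [set y | edf_lower nu kappa Theta v phi a delta y
                              <= (derive1 kappa theta)%:E])
        (edf_density kappa v phi a theta y)%:E)%E
  /\
  (* P(E[Y] <= u^delta(Y)) >= 1 - delta *)
  ((1 - delta)%:E <=
     \int[nu]_(y in [set y | (derive1 kappa theta)%:E
                              <= edf_upper nu kappa Theta v phi a delta y])
        (edf_density kappa v phi a theta y)%:E)%E.
Proof.
move=> _ ma v0 phi0 hT hn _ hA1 hth hd.
exact: (@main_sec R nu a kappa Theta v phi ma v0 phi0 hT hn hA1 theta delta hth hd).
Qed.
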